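(* Let $Z=Z_\Sigma$ be a toric variety with a non-degenerate simplicial fan $\Sigma$ in $N=\mathbb{Z}^r$, with notation as in the context. Then \[ [\operatorname{Cl}(Z):\operatorname{Pic}(Z)] \;=\; \frac{1}{|\hat K|}\prod_{\sigma\in\Sigma_{\max}}|K_\sigma|. \]
   Context: Non-degenerate means the primitive ray generators $v_1,\dots,v_n$ of $\Sigma$ generate $\mathbb{Q}^r$ as a convex cone (completeness is not required). Let $F=\mathbb{Z}^n$, $P\colon F\to N$, $e_i\mapsto v_i$, $M=N^*$, $E=F^*$, $K=E/P^*(M)\cong\operatorname{Cl}(Z)$. For $\sigma=\operatorname{cone}(v_{i_1},\dots,v_{i_{n_\sigma}})\in\Sigma_{\max}$ let $N_\sigma=\operatorname{lin}_{\mathbb{Q}}(\sigma)\cap N$, $F_\sigma=\mathbb{Z}^{n_\sigma}$, $P_\sigma\colon F_\sigma\to N_\sigma$, $e_j\mapsto v_{i_j}$, $\beta_\sigma\colon F_\sigma\to F$, $e_j\mapsto e_{i_j}$, $K_\sigma=F_\sigma^*/P_\sigma^*(N_\sigma^* )\cong\operatorname{Cl}(U_\sigma)$ (class group of the affine chart), and $\pi_\sigma\colon K\to K_\sigma$ the map induced by $\beta_\sigma^*$ (restriction of classes). Let $\pi\colon K\to\bigoplus_{\sigma\in\Sigma_{\max}}K_\sigma$, $w\mapsto(\pi_\sigma(w))_\sigma$, and $\hat K=\big(\bigoplus_\sigma K_\sigma\big)/\pi(K)$. *)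

(* Defs.v *)
From HB Require Import structures.
From mathcomp Require Import all_boot all_order all_algebra.
Set Implicit Arguments. Unset Strict Implicit. Unset Printing Implicit Defensive.
Import Order.TTheory GRing.Theory Num.Theory.
Local Open Scope ring_scope.

(* [quot_card A B k]: the quotient of the subgroup A of G by the relation
   x ~ y <-> x - y \in B has exactly k classes (B is a subgroup, its
   intersection with A being the subgroup we quotient by). *)
Definition quot_card (G : zmodType) (A B : G -> Prop) (k : nat) : Prop :=
  exists s : seq G,
    [/\ size s = k,
        forall i, (i < size s)%N -> A (nth 0 s i),
        forall i j, (i < size s)%N -> (j < size s)%N -> i <> j ->
           ~ B (nth 0 s i - nth 0 s j)
      & forall a, A a -> exists i, (i < size s)%N /\ B (a - nth 0 s i)].

(* N = Z^r as row vectors, M = N^vee also as row vectors, with pairing: *)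
Definition pairing (r : nat) (m x : 'rV[int]_r) : int := \sum_(j < r) m 0 j * x 0 j.

Definition toQ (r : nat) (x : 'rV[int]_r) : 'rV[rat]_r := map_mx (fun z : int => z%:~R) x.

Definition primitive (r : nat) (x : 'rV[int]_r) : Prop :=
  forall d : nat, (forall j, x 0 j \in dvdz d) -> d = 1%N.

Definition in_cone (r n : nat) (v : 'I_n -> 'rV[int]_r) (S : {set 'I_n}) (x : 'rV[rat]_r) : Prop :=
  exists c : 'I_n -> rat, (forall i, 0 <= c i) /\ (forall i, i \notin S -> c i = 0) /\
    x = \sum_(i < n) c i *: toQ (v i).

Definition in_span (r n : nat) (v : 'I_n -> 'rV[int]_r) (S : {set 'I_n}) (x : 'rV[rat]_r) : Prop :=
  exists c : 'I_n -> rat, (forall i, i \notin S -> c i = 0) /\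
    x = \sum_(i < n) c i *: toQ (v i).

Definition lin_indep (r n : nat) (v : 'I_n -> 'rV[int]_r) (S : {set 'I_n}) : Prop :=
  forall c : 'I_n -> rat, (forall i, i \notin S -> c i = 0) ->
    \sum_(i < n) c i *: toQ (v i) = 0 -> forall i, c i = 0.

(* A simplicial fan Sigma in N = Z^r with primitive ray generators v_1..v_n,
   given by its set Smax of maximal cones, each maximal cone sigma being
   encoded by the index set {i | v_i is a ray of sigma}; cone(sigma) =
   cone(v_i : i in sigma).  The cones of Sigma are the faces of the maximal
   cones, i.e. cone(tau) for tau \subset sigma \in Smax. *)
Definition simplicial_fan (r n : nat) (v : 'I_n -> 'rV[int]_r)
    (Smax : {set {set 'I_n}}) : Prop :=
  [/\ (forall i, primitive (v i)) /\ injective v,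
      Smax != set0 /\ (forall i, exists2 s, s \in Smax & i \in s),
      (forall s, s \in Smax -> lin_indep v s),
      (forall s t, s \in Smax -> t \in Smax -> forall x,
          (in_cone v s x /\ in_cone v t x) <-> in_cone v (s :&: t) x)
    &
      (forall s t, s \in Smax -> t \in Smax -> s \subset t -> s = t)].

Definition nondegenerate_rays (r n : nat) (v : 'I_n -> 'rV[int]_r) : Prop :=
  forall x : 'rV[rat]_r, in_cone v setT x.

(* ---------- Cl(Z) = K = E / P^vee(M), E = Z^n ---------- *)
Definition Eall (n : nat) (D : 'rV[int]_n) : Prop := True.

Definition principal (r n : nat) (v : 'I_n -> 'rV[int]_r) (D : 'rV[int]_n) : Prop :=
  exists m : 'rV[int]_r, forall i, D 0 i = pairing m (v i).

Definition cartier (r n : nat) (v : 'I_n -> 'rV[int]_r) (Smax : {set {set 'I_n}})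
    (D : 'rV[int]_n) : Prop :=
  forall s, s \in Smax -> forall tau : {set 'I_n}, tau \subset s ->
    exists m : 'rV[int]_r, forall i, i \in tau -> D 0 i = pairing m (v i).

(* x \in E represents a class of Cl(Z) = K lying in Pic(Z)
   = CDiv_T(Z)/P^vee(M) \subset K. *)
Definition in_Pic (r n : nat) (v : 'I_n -> 'rV[int]_r) (Smax : {set {set 'I_n}})
    (x : 'rV[int]_n) : Prop :=
  exists D, cartier v Smax D /\ principal v (x - D).

Definition index_Cl_Pic (r n : nat) (v : 'I_n -> 'rV[int]_r) (Smax : {set {set 'I_n}})
    (k : nat) : Prop :=
  quot_card (@Eall n) (in_Pic v Smax) k.

(* ---------- K_sigma = F_sigma^vee / P_sigma^vee(N_sigma^vee) ---------- *)
(* F_sigma^vee = Z^{n_sigma} is encoded as the vectors of Z^n supported on sigma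
   (coordinate j of F_sigma^vee <-> coordinate i_j of Z^n). *)
Definition Fdual (n : nat) (s : {set 'I_n}) (y : 'rV[int]_n) : Prop :=
  forall i, i \notin s -> y 0 i = 0.

Definition Nsig (r n : nat) (v : 'I_n -> 'rV[int]_r) (s : {set 'I_n}) (x : 'rV[int]_r) : Prop :=
  in_span v s (toQ x).

(* phi restricted to N_sigma is an element of N_sigma^vee = Hom(N_sigma, Z) *)
Definition Nsig_dual (r n : nat) (v : 'I_n -> 'rV[int]_r) (s : {set 'I_n})
    (phi : 'rV[int]_r -> int) : Prop :=
  forall x y, Nsig v s x -> Nsig v s y -> phi (x + y) = phi x + phi y.

Definition PsigImg (r n : nat) (v : 'I_n -> 'rV[int]_r) (s : {set 'I_n}) (y : 'rV[int]_n) : Prop :=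
  Fdual s y /\ exists phi, Nsig_dual v s phi /\ forall i, i \in s -> y 0 i = phi (v i).

Definition card_Ksig (r n : nat) (v : 'I_n -> 'rV[int]_r) (s : {set 'I_n}) (k : nat) : Prop :=
  quot_card (Fdual s) (PsigImg v s) k.

(* ---------- hat K = (\oplus_sigma K_sigma) / pi(K) ---------- *)
(* elements of \oplus_{sigma in Smax} F_sigma^vee : families X sigma, zero for
   sigma outside Smax *)
Definition SumF (n : nat) (Smax : {set {set 'I_n}}) (X : {ffun {set 'I_n} -> 'rV[int]_n}) : Prop :=
  forall s, (s \in Smax -> Fdual s (X s)) /\ (s \notin Smax -> X s = 0).

Definition restr (n : nat) (s : {set 'I_n}) (w : 'rV[int]_n) : 'rV[int]_n :=
  \row_i (if i \in s then w 0 i else 0).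

Definition in_piK (r n : nat) (v : 'I_n -> 'rV[int]_r) (Smax : {set {set 'I_n}})
    (X : {ffun {set 'I_n} -> 'rV[int]_n}) : Prop :=
  exists w : 'rV[int]_n, forall s, s \in Smax -> PsigImg v s (X s - restr s w).

Definition card_Khat (r n : nat) (v : 'I_n -> 'rV[int]_r) (Smax : {set {set 'I_n}}) (k : nat) : Prop :=
  quot_card (SumF Smax) (in_piK v Smax) k.

(* Main.v *)
Require Import Defs.
From HB Require Import structures.
From mathcomp Require Import all_boot all_order all_algebra.
From Stdlib Require Import ClassicalEpsilon.
Import Order.TTheory GRing.Theory Num.Theory.
Local Open Scope ring_scope.
Set Implicit Arguments. Unset Strict Implicit. Unset Printing Implicit Defensive.

Definition asb (P : Prop) : bool := if excluded_middle_informative P then true else false.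
Lemma asbP (P : Prop) : reflect P (asb P).
Proof. rewrite /asb; case: excluded_middle_informative => h; constructor => //. Qed.

Lemma idA (G : zmodType) (a b c d : G) : a + b - (c + d) - (b - d) = a - c.
Proof. by rewrite -[RHS](addrK (b - d)) addrACA -opprD. Qed.
Lemma idB (G : zmodType) (a b c d : G) : a - b - (c - d) + (b - d) = a - c.
Proof. by rewrite [- (c - d)]opprD [a - b + _]addrACA -opprD subrK. Qed.
Lemma idC (G : zmodType) (a b c : G) : a + b - (a + c) = b - c.
Proof. by rewrite opprD addrACA subrr add0r. Qed.
Lemma idD (G : zmodType) (a b c : G) : a - b + (b - c) = a - c.
Proof. by rewrite addrA subrK. Qed.

Section Abstract.
Variable G : zmodType.

Definition subg (B : G -> Prop) := B 0 /\ forall x y, B x -> B y -> B (x - y).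

Lemma subgN B : subg B -> forall x, B x -> B (- x).
Proof. by case=> h0 hB x hx; rewrite -sub0r; apply: hB. Qed.

Lemma subgD B : subg B -> forall x y, B x -> B y -> B (x + y).
Proof. move=> sB x y hx hy; rewrite -[y]opprK; apply: sB.2 => //; exact: subgN. Qed.

Definition qcT (A B : G -> Prop) (T : finType) (g : T -> G) :=
  [/\ forall t, A (g t), forall t t', B (g t - g t') -> t = t'
    & forall a, A a -> exists t, B (a - g t)].

Lemma qcT_card A B (T : finType) (g : T -> G) : qcT A B g -> quot_card A B #|T|.
Proof.
case=> hA hB hC; exists (map g (enum T)); split.
- by rewrite size_map cardE.
- move=> i; rewrite size_map; case E: (enum T) => [|x0 s] // hi.
  by rewrite -E (nth_map x0) ?E.
- move=> i j; rewrite size_map; case E: (enum T) => [|x0 s] // hi hj hij.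
  rewrite -E (nth_map x0) ?E // (nth_map x0) ?E // => /hB h.
  apply: hij; have := h; rewrite -E => /eqP; rewrite nth_uniq ?enum_uniq ?E //.
  by move/eqP.
- move=> a /hC [t ht]; have tin : t \in enum T by rewrite mem_enum.
  exists (index t (enum T)); rewrite size_map index_mem tin; split => //.
  by rewrite (nth_map t) ?index_mem // nth_index.
Qed.

Lemma quot_qcT A B k : quot_card A B k -> exists g : 'I_k -> G, qcT A B g.
Proof.
case=> s [hs hA hB hC]; exists (fun i : 'I_k => nth 0 s i); split.
- by move=> i; apply: hA; rewrite hs.
- move=> i j h; apply/val_inj; case: (eqVneq (i : nat) j) => // ne; exfalso.
  by apply: (hB i j) h; rewrite ?hs //; apply/eqP.
- move=> a /hC [i [hi hb]]; rewrite hs in hi; by exists (Ordinal hi).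
Qed.

Lemma qc_le A B (T1 T2 : finType) (g1 : T1 -> G) (g2 : T2 -> G) :
  subg B -> qcT A B g1 -> qcT A B g2 -> (#|T1| <= #|T2|)%N.
Proof.
move=> sB [hA1 hB1 hC1] [hA2 hB2 hC2].
have ex : forall t, exists t2, B (g1 t - g2 t2) by move=> t; apply: hC2.
pose h t := proj1_sig (constructive_indefinite_description _ (ex t)).
have hh t : B (g1 t - g2 (h t)) by rewrite /h; case: constructive_indefinite_description.
apply: (@leq_card _ _ h) => t t' e; apply: hB1.
have := subgD sB (hh t) (subgN sB (hh t')); rewrite e.
by rewrite opprB addrA subrK.
Qed.

Lemma qc_uniq A B (T1 T2 : finType) (g1 : T1 -> G) (g2 : T2 -> G) :
  subg B -> qcT A B g1 -> qcT A B g2 -> #|T1| = #|T2|.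
Proof. by move=> sB h1 h2; apply/eqP; rewrite eqn_leq (qc_le sB h1 h2) (qc_le sB h2 h1). Qed.

Lemma coarsen A B (T : finType) (g : T -> G) : subg B ->
  (forall t, A (g t)) -> (forall a, A a -> exists t, B (a - g t)) ->
  exists k, quot_card A B k.
Proof.
move=> sB hA hC.
pose P : pred T := fun t => asb (forall t', B (g t - g t') -> (enum_rank t <= enum_rank t')%N).
exists #|({t : T | P t} : finType)|; apply: (@qcT_card _ _ _ (fun t : ({t : T | P t} : finType) => g (val t))); split.
- by move=> t; apply: hA.
- move=> [t1 p1] [t2 p2] /= h; apply/val_inj => /=.
  move/asbP: p1 => /(_ _ h) l1; have := subgN sB h; rewrite opprB.
  move/asbP: p2 => p2 /p2 l2; apply: enum_rank_inj; apply/val_inj => /=.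
  by apply/eqP; rewrite eqn_leq l1 l2.
- move=> a /hC [t ht].
  pose Q t' := asb (B (g t - g t')).
  have Qt : Q t by apply/asbP; rewrite subrr; exact: sB.1.
  case: (arg_minnP (fun t' => val (enum_rank t')) Qt) => t0 /asbP Q0 m0.
  have Pt0 : P t0.
    apply/asbP => t' h; apply: m0; apply/asbP.
    by have := subgD sB Q0 h; rewrite addrA subrK.
  exists (exist _ t0 Pt0) => /=.
  by have := subgD sB ht Q0; rewrite addrA subrK.
Qed.

Lemma tower A S Q (T1 T2 : finType) (g1 : T1 -> G) (g2 : T2 -> G) :
  subg A -> subg S -> subg Q -> (forall x, Q x -> S x) ->
  qcT A S g1 -> qcT (fun x => A x /\ S x) Q g2 ->
  qcT A Q (fun p : T1 * T2 => g1 p.1 + g2 p.2).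
Proof.
move=> sA sS sQ QS [hA1 hB1 hC1] [hA2 hB2 hC2]; split.
- by move=> [a b] /=; apply: (subgD sA); [exact: hA1 | exact: (hA2 b).1].
- move=> [a b] [a' b'] /= h.
  have e1 : a = a'.
    apply: hB1; have := sS.2 _ _ (QS _ h) (sS.2 _ _ (hA2 b).2 (hA2 b').2).
    by rewrite idA.
  subst a'; congr (_, _); apply: hB2.
  by move: h; rewrite idC.
- move=> x hx; case: (hC1 _ hx) => t1 h1.
  have hx' : A (x - g1 t1) /\ S (x - g1 t1) by split => //; apply: sA.2.
  case: (hC2 _ hx') => t2 h2; exists (t1, t2) => /=.
  by rewrite opprD addrA.
Qed.

Lemma sub_finite A S Q (T : finType) (g : T -> G) :
  subg S -> subg Q -> (forall x, Q x -> S x) -> qcT A Q g ->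
  qcT (fun x => A x /\ S x) Q (fun t : {t : T | asb (S (g t))} => g (val t)).
Proof.
move=> sS sQ QS [hA hB hC]; split.
- by move=> [t p]; split; [apply: hA | apply/asbP].
- by move=> [t p] [t' p'] /= /hB e; apply/val_inj.
- move=> a [Aa Sa]; case: (hC _ Aa) => t ht.
  have p : asb (S (g t)).
    by apply/asbP; have := sS.2 _ _ Sa (QS _ ht); rewrite opprB addrC subrK.
  by exists (exist _ t p).
Qed.

End Abstract.

Lemma qc_iso (G1 G2 : zmodType) (f : G1 -> G2) (A2 Q : G2 -> Prop) (T : finType) (g : T -> G2) :
  (forall x y, f (x - y) = f x - f y) -> subg Q -> (forall w, A2 (f w)) ->
  qcT (fun x => A2 x /\ exists w, Q (x - f w)) Q g ->
  exists h : T -> G1, qcT (fun _ => True) (fun w => Q (f w)) h.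
Proof.
move=> fB sQ hA [hA' hB hC].
have ex t : exists w, Q (g t - f w) by case: (hA' t).
pose h t := proj1_sig (constructive_indefinite_description _ (ex t)).
have hh t : Q (g t - f (h t)) by rewrite /h; case: constructive_indefinite_description.
exists h; split => //.
- move=> t t'; rewrite fB => q; apply: hB.
  have := subgD sQ (sQ.2 _ _ (hh t) (hh t')) q.
  by rewrite idB.
- move=> w _.
  have : A2 (f w) /\ exists w', Q (f w - f w') by split => //; exists w; rewrite subrr; exact: sQ.1.
  move=> /hC [t ht]; exists t; rewrite fB.
  have := subgD sQ ht (hh t).
  by rewrite idD.
Qed.

Lemma quot_card_ext (G : zmodType) (A A' B B' : G -> Prop) k :
  (forall x, A x <-> A' x) -> (forall x, B x <-> B' x) -> quot_card A B k -> quot_card A' B' k.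
Proof.
move=> eA eB [s [h1 h2 h3 h4]]; exists s; split => //.
- by move=> i /h2 /eA.
- by move=> i j hi hj ne /eB; apply: h3.
- by move=> a /eA /h4 [i [hi /eB hb]]; exists i.
Qed.


Section M1.
Variables (r n : nat) (v : 'I_n -> 'rV[int]_r) (s : {set 'I_n}).

Definition VQ : 'M[rat]_(n, r) := \matrix_(j, k) (if j \in s then toQ (v j) 0 k else 0).

Lemma rowVQ j : row j VQ = if j \in s then toQ (v j) else 0.
Proof. by apply/rowP => k; rewrite !mxE; case: (j \in s) => //; rewrite mxE. Qed.

Lemma coef_pinv j i : lin_indep v s -> j \in s -> i \in s ->
  (toQ (v j) *m pinvmx VQ) 0 i = (i == j)%:R.
Proof.
move=> li js is_.
set c := toQ (v j) *m pinvmx VQ.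
have hc : c *m VQ = toQ (v j).
  by rewrite /c mulmxKpV // -[toQ (v j)](_ : row j VQ = _) ?row_sub // rowVQ js.
pose cc i := if i \in s then c 0 i - (i == j)%:R else 0.
have H0 : \sum_(i < n) cc i *: toQ (v i) = 0.
  have -> : \sum_(i < n) cc i *: toQ (v i) =
            \sum_(i < n) (c 0 i *: row i VQ - (i == j)%:R *: row i VQ).
    apply: eq_bigr => k _; rewrite rowVQ /cc; case: (k \in s).
      by rewrite scalerBl.
    by rewrite scale0r !scaler0 subrr.
  rewrite sumrB -mulmx_sum_row hc (bigD1 j) //= eqxx scale1r big1 ?addr0.
    by rewrite rowVQ js subrr.
  by move=> k /negPf ->; rewrite scale0r.
have hs : forall k, k \notin s -> cc k = 0 by move=> k /negPf; rewrite /cc => ->.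
by have := li cc hs H0 i; rewrite /cc is_ => /eqP; rewrite subr_eq0 => /eqP.
Qed.

Definition Pq := pinvmx VQ.
Definition Dd : int := \prod_(p : 'I_r * 'I_n) denq (Pq p.1 p.2).
Definition Pint : 'M[int]_(r, n) :=
  \matrix_(k, i) (numq (Pq k i) * \prod_(p : 'I_r * 'I_n | p != (k, i)) denq (Pq p.1 p.2)).

Lemma Dd_gt0 : 0 < Dd.
Proof. by apply: prodr_gt0 => p _; exact: denq_gt0. Qed.

Lemma Pint_rat k i : (Pint k i)%:~R = Pq k i * Dd%:~R :> rat.
Proof.
rewrite mxE /Dd [in RHS](bigD1 (k, i)) //= !rmorphM /= numqE mulrA.
by [].
Qed.

Lemma M1 : lin_indep v s -> forall j i, j \in s -> i \in s ->
  (v j *m Pint) 0 i = if i == j then Dd else 0.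
Proof.
move=> li j i js is_; apply: (@intr_inj rat).
have := coef_pinv li js is_; rewrite !mxE => e.
rewrite rmorph_sum /=.
have -> : \sum_(k < r) (v j 0 k * Pint k i)%:~R = \sum_(k < r) toQ (v j) 0 k * Pq k i * Dd%:~R.
  by apply: eq_bigr => k _; rewrite intrM Pint_rat [toQ _ _ _]mxE mulrA.
rewrite -mulr_suml /Pq e; case: (i == j); rewrite ?mul1r ?mul0r //.
Qed.

End M1.


Section Nsig.
Variables (r n : nat) (v : 'I_n -> 'rV[int]_r) (s : {set 'I_n}).

Lemma toQD (x y : 'rV[int]_r) : toQ (x + y) = toQ x + toQ y.
Proof. by apply/rowP => k; rewrite !mxE intrD. Qed.
Lemma toQZ (a : int) (x : 'rV[int]_r) : toQ (a *: x) = a%:~R *: toQ x.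
Proof. by apply/rowP => k; rewrite !mxE intrM. Qed.
Lemma toQ0 : toQ (0 : 'rV[int]_r) = 0.
Proof. by apply/rowP => k; rewrite !mxE. Qed.

Lemma Nsig0 : Nsig v s 0.
Proof.
exists (fun _ => 0); split => //; rewrite toQ0 big1 // => i _; exact: scale0r.
Qed.
Lemma NsigD x y : Nsig v s x -> Nsig v s y -> Nsig v s (x + y).
Proof.
move=> [c1 [h1 e1]] [c2 [h2 e2]]; exists (fun i => c1 i + c2 i); split.
  by move=> i hi; rewrite h1 ?h2 ?addr0.
by rewrite toQD e1 e2 -big_split; apply: eq_bigr => i _; rewrite scalerDl.
Qed.
Lemma NsigZ a x : Nsig v s x -> Nsig v s (a *: x).
Proof.
move=> [c [h e]]; exists (fun i => a%:~R * c i); split.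
  by move=> i hi; rewrite h ?mulr0.
by rewrite toQZ e scaler_sumr; apply: eq_bigr => i _; rewrite scalerA.
Qed.

Variable phi : 'rV[int]_r -> int.
Hypothesis hphi : Nsig_dual v s phi.

Lemma phi0 : phi 0 = 0.
Proof.
have := hphi Nsig0 Nsig0; rewrite addr0 => e.
by move/(congr1 (fun z => z - phi 0)): e; rewrite subrr addrK.
Qed.

Lemma phiN x : Nsig v s x -> phi (- x) = - phi x.
Proof.
move=> hx; have hnx : Nsig v s (- x) by rewrite -scaleN1r; apply: NsigZ.
have := hphi hx hnx; rewrite subrr phi0 => /esym/eqP; rewrite addrC addr_eq0.
by move/eqP.
Qed.

Lemma phiZ a x : Nsig v s x -> phi (a *: x) = a * phi x.
Proof.
move=> hx.
have hp m : phi (m%:Z *: x) = m%:Z * phi x.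
  elim: m => [|m IH]; first by rewrite scale0r phi0 mul0r.
  rewrite intS scalerDl scale1r hphi //; last exact: NsigZ.
  by rewrite IH mulrDl mul1r.
case: a => m; first exact: hp.
by rewrite NegzE scaleNr phiN ?hp ?mulNr //; apply: NsigZ.
Qed.

Lemma phi_sum (I : finType) (P : pred I) (F : I -> int) (X : I -> 'rV[int]_r) :
  (forall t, P t -> Nsig v s (X t)) ->
  phi (\sum_(t | P t) F t *: X t) = \sum_(t | P t) F t * phi (X t).
Proof.
move=> hX.
suff : Nsig v s (\sum_(t | P t) F t *: X t) /\
       phi (\sum_(t | P t) F t *: X t) = \sum_(t | P t) F t * phi (X t) by case.
apply: (big_rec2 (fun y1 y2 => Nsig v s y1 /\ phi y1 = y2)).
  by split; [exact: Nsig0 | exact: phi0].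
move=> t y1 y2 Pt [h1 <-]; have hZ := NsigZ (F t) (hX t Pt); split.
  exact: NsigD.
by rewrite hphi // phiZ //; apply: hX.
Qed.

End Nsig.


Section SAT.
Variables (r n : nat) (v : 'I_n -> 'rV[int]_r) (s : {set 'I_n}).

Definition Vz : 'M[int]_(n, r) := \matrix_(j, k) (if j \in s then v j 0 k else 0).
Lemma rowVz j : j \in s -> row j Vz = v j.
Proof. by move=> js; apply/rowP => k; rewrite !mxE js. Qed.

Lemma SAT phi : Nsig_dual v s phi ->
  exists m, forall i, i \in s -> phi (v i) = pairing m (v i).
Proof.
move=> hphi.
case: (int_Smith_normal_form Vz) => L uL [R uR [d _ eV]].
set Dm := \matrix_(i, j) _ in eV.
pose good (t : 'I_r) := ((t : nat) < n)%N && (d`_t != 0).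
pose Ri := invmx R; pose Li := invmx L.
have VRi : Vz *m Ri = L *m Dm by rewrite eV -mulmxA mulmxV // mulmx1.
have LiV : Li *m Vz = Dm *m R by rewrite eV !mulmxA mulVmx // mul1mx.
have F1 : forall i t, i \in s -> ~~ good t -> (v i *m Ri) 0 t = 0.
  move=> i t is_ gt; rewrite -(rowVz is_) -row_mul VRi !mxE big1 // => j _.
  rewrite /Dm mxE; case: eqP => [ejt|]; last by rewrite mulr0n mulr0.
  move: gt; rewrite /good -ejt ltn_ord /= negbK => /eqP ->.
  by rewrite mul0rn mulr0.
have F2 : forall t, good t -> Nsig v s (row t R).
  move=> t /andP [tn dt]; pose t' := Ordinal tn.
  exists (fun j => if j \in s then ((d`_t)%:~R)^-1 * (Li t' j)%:~R else 0); split.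
    by move=> j /negPf ->.
  apply/rowP => k; rewrite summxE.
  have -> : \sum_(j < n) ((if j \in s then ((d`_t)%:~R)^-1 * (Li t' j)%:~R else 0) *: toQ (v j)) 0 k
     = ((d`_t)%:~R)^-1 * ((Li *m Vz) t' k)%:~R.
    rewrite !mxE rmorph_sum mulr_sumr; apply: eq_bigr => j _; rewrite !mxE.
    by case: (j \in s); rewrite ?mul0r ?mulr0 ?rmorph0 ?mulr0 // rmorphM /= mulrA.
  rewrite LiV !mxE (bigD1 t) //= big1 ?addr0.
    rewrite /Dm mxE eqxx mulr1n intrM mulrA mulVf ?mul1r //.
    by rewrite intr_eq0.
  move=> j ne; rewrite /Dm mxE; case: eqP => [e|]; last by rewrite mulr0n mul0r.
  by exfalso; move/eqP: ne; apply; apply/val_inj.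
pose b (t : 'I_r) := if good t then phi (row t R) else 0.
exists (\row_k \sum_t b t * Ri k t) => i is_.
have e5 : v i = \sum_(t | good t) (v i *m Ri) 0 t *: row t R.
  rewrite -[LHS]mulmx1 -(mulVmx uR) mulmxA mulmx_sum_row.
  rewrite [RHS]big_mkcond; apply: eq_bigr => t _.
  by case: ifP => // /negbT /(F1 _ _ is_) ->; rewrite scale0r.
rewrite [in LHS]e5 (phi_sum hphi) //.
rewrite /pairing big_mkcond /=.
under [RHS]eq_bigr => k _ do rewrite mxE mulr_suml.
rewrite exchange_big /=; apply: eq_bigr => t _.
rewrite /b; case: ifP => gt.
  by rewrite mxE mulr_suml; apply: eq_bigr => k _; rewrite mulrC [v i 0 k * _]mulrC mulrA.
by symmetry; apply: big1 => k _; rewrite !mul0r.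
Qed.

End SAT.


Lemma idE (G : zmodType) (a b c d : G) : a - c - (b - d) = a - b - (c - d).
Proof. by rewrite !opprD addrACA. Qed.

Lemma pairingDr r (m x y : 'rV[int]_r) : pairing m (x + y) = pairing m x + pairing m y.
Proof. by rewrite /pairing -big_split; apply: eq_bigr => j _; rewrite mxE mulrDr. Qed.
Lemma pairingDl r (m m' x : 'rV[int]_r) : pairing (m + m') x = pairing m x + pairing m' x.
Proof. by rewrite /pairing -big_split; apply: eq_bigr => j _; rewrite mxE mulrDl. Qed.
Lemma pairing0 r (x : 'rV[int]_r) : pairing 0 x = 0.
Proof. by rewrite /pairing big1 // => j _; rewrite mxE mul0r. Qed.

Section Ksig.
Variables (r n : nat) (v : 'I_n -> 'rV[int]_r) (s : {set 'I_n}).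

Lemma subg_Psig : subg (PsigImg v s).
Proof.
split.
  split; first by move=> i _; rewrite mxE.
  exists (fun _ => 0); split; first by move=> x y _ _; rewrite addr0.
  by move=> i _; rewrite mxE.
move=> y1 y2 [f1 [p1 [h1 e1]]] [f2 [p2 [h2 e2]]]; split.
  by move=> i hi; rewrite !mxE f1 ?f2 ?subr0.
exists (fun x => p1 x - p2 x); split.
  by move=> x y hx hy; rewrite h1 ?h2 // opprD addrACA.
by move=> i hi; rewrite !mxE e1 ?e2.
Qed.

Lemma Ksig_finite : lin_indep v s -> exists k, quot_card (Fdual s) (PsigImg v s) k.
Proof.
move=> li.
have D0 := Dd_gt0 v s.
have Dn0 : Dd v s != 0 by rewrite gt_eqF.
pose d := absz (Dd v s).
have dE : d%:Z = Dd v s by rewrite gez0_abs // ltW.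
pose g (t : {ffun 'I_n -> 'I_d}) : 'rV[int]_n := \row_i (if i \in s then (t i : nat)%:Z else 0).
apply: (@coarsen _ _ _ _ g subg_Psig).
  by move=> t i /negPf hi; rewrite mxE hi.
move=> y hy.
have hlt : forall i, (absz (modz (y 0%R i) (Dd v s)) < d)%N.
  move=> i; rewrite -ltz_nat dE gez0_abs ?modz_ge0 //.
  exact: ltz_pmod.
exists [ffun i => Ordinal (hlt i)].
pose qv : 'rV[int]_n := \row_i (if i \in s then (divz (y 0 i) (Dd v s)) else 0).
split.
  by move=> i hi; rewrite !mxE hy // (negPf hi) subr0.
exists (fun x => \sum_i (x *m Pint v s) 0 i * qv 0 i); split.
  move=> x1 x2 _ _; rewrite -big_split; apply: eq_bigr => i _.
  by rewrite mulmxDl mxE mulrDl.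
move=> j js.
rewrite (bigD1 j) //= big1 ?addr0.
  rewrite (M1 li js js) eqxx !mxE js ffunE /= gez0_abs ?modz_ge0 //.
  by rewrite {1}(divz_eq (y 0 j) (Dd v s)) addrK mulrC.
move=> i ne; rewrite [qv 0 i]mxE; case: ifP => is_; last by rewrite mulr0.
by rewrite (M1 li js is_) (negPf ne) mul0r.
Qed.

End Ksig.


Lemma qcT_extA (G : zmodType) (A A' B : G -> Prop) (T : finType) (g : T -> G) :
  (forall x, A x <-> A' x) -> qcT A B g -> qcT A' B g.
Proof. by move=> e [h1 h2 h3]; split => // [t|a /e]; [apply/e | apply: h3]. Qed.

Section Main.
Variables (r n : nat) (v : 'I_n -> 'rV[int]_r) (Smax : {set {set 'I_n}}).

Local Notation FF := {ffun {set 'I_n} -> 'rV[int]_n}.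

Definition Hp (X : FF) := SumF Smax X.
Definition Qp (X : FF) := forall s, s \in Smax -> PsigImg v s (X s).
Definition Sp (X : FF) := in_piK v Smax X.
Definition fE (w : 'rV[int]_n) : FF := [ffun s => if s \in Smax then restr s w else 0].

Lemma restrB (s : {set 'I_n}) (x y : 'rV[int]_n) : restr s (x - y) = restr s x - restr s y.
Proof. by apply/rowP => i; rewrite !mxE; case: ifP; rewrite ?subr0. Qed.
Lemma restr0 (s : {set 'I_n}) : restr s (0 : 'rV[int]_n) = 0.
Proof. by apply/rowP => i; rewrite !mxE; case: ifP. Qed.
Lemma Fdual_restr (s : {set 'I_n}) (x : 'rV[int]_n) : Fdual s (restr s x).
Proof. by move=> i /negPf hi; rewrite mxE hi. Qed.

Lemma subg_Hp : subg Hp.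
Proof.
split.
  by move=> s; split; rewrite ffunE // => _ i _; rewrite mxE.
move=> X Y hX hY s; rewrite !ffunE; split.
  by move=> hs i hi; rewrite !mxE ((hX s).1 hs i hi) ((hY s).1 hs i hi) subr0.
by move=> hs; rewrite (hX s).2 ?(hY s).2 ?subr0.
Qed.

Lemma subg_Qp : subg Qp.
Proof.
split; first by move=> s _; rewrite ffunE; exact: (subg_Psig v s).1.
by move=> X Y hX hY s hs; rewrite !ffunE; apply: (subg_Psig v s).2; [apply: hX | apply: hY].
Qed.

Lemma subg_Sp : subg Sp.
Proof.
split.
  by exists 0 => s hs; rewrite ffunE restr0 subr0; exact: (subg_Psig v s).1.
move=> X Y [w1 h1] [w2 h2]; exists (w1 - w2) => s hs.
rewrite !ffunE restrB idE; apply: (subg_Psig v s).2; [exact: h1 | exact: h2].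
Qed.

Lemma QS X : Qp X -> Sp X.
Proof. by move=> hX; exists 0 => s hs; rewrite restr0 subr0; apply: hX. Qed.

Lemma fEB x y : fE (x - y) = fE x - fE y.
Proof. by apply/ffunP => s; rewrite !ffunE; case: ifP; rewrite ?restrB ?subr0. Qed.

Lemma fE_Hp w : Hp (fE w).
Proof. by move=> s; rewrite ffunE; case: ifP => hs; split => // _; apply: Fdual_restr. Qed.

Lemma Sp_fE X : Sp X <-> exists w, Qp (X - fE w).
Proof.
split => [[w h]|[w h]]; exists w => s hs.
  by rewrite !ffunE hs; apply: h.
by have := h s hs; rewrite !ffunE hs.
Qed.

Lemma Pic_fE : simplicial_fan v Smax -> forall x, in_Pic v Smax x <-> Qp (fE x).
Proof.
move=> _ x; split.
  move=> [D [cart [m0 pm0]]] s hs; rewrite ffunE hs; split; first exact: Fdual_restr.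
  case: (cart s hs s (subxx _)) => m hm.
  exists (pairing (m + m0)); split; first by move=> y z _ _; rewrite pairingDr.
  move=> i hi; rewrite mxE hi pairingDl -hm // -pm0 mxE.
  by rewrite mxE addrCA subrr addr0.
move=> H; exists x; split.
  move=> s hs tau sub.
  have := H s hs; rewrite ffunE hs => -[_ [phi [hphi hv]]].
  case: (SAT hphi) => m hm; exists m => i hi.
  have his : i \in s by apply: (subsetP sub).
  by rewrite -hm // -hv // mxE his.
by exists 0 => i; rewrite pairing0 !mxE subrr.
Qed.

End Main.


Theorem proposition2p7 (r n : nat) (v : 'I_n -> 'rV[int]_r)
    (Smax : {set {set 'I_n}}) :
  simplicial_fan v Smax -> nondegenerate_rays v ->
  exists (idx khat : nat) (kS : {set 'I_n} -> nat),
    [/\ index_Cl_Pic v Smax idx,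
        card_Khat v Smax khat,
        (forall s, s \in Smax -> card_Ksig v s (kS s))
      & (idx%:R : rat) = (khat%:R)^-1 * \prod_(s in Smax) (kS s)%:R].
Proof.
move=> hfan _.
have [_ _ indep _ _] := hfan.
have spec : forall s : {set 'I_n}, exists k, exists g : 'I_k -> 'rV[int]_n,
   (s \in Smax -> qcT (Fdual s) (PsigImg v s) g) /\ (s \notin Smax -> k = 1%N).
  move=> s; case: (boolP (s \in Smax)) => hs.
    case: (Ksig_finite (indep s hs)) => k hk; case: (quot_qcT hk) => g hg.
    by exists k, g; split => //; rewrite hs.
  by exists 1%N, (fun _ => 0); split => // h; rewrite h in hs.
pose kS s := proj1_sig (constructive_indefinite_description _ (spec s)).
have gS_ex : forall s, exists g : 'I_(kS s) -> 'rV[int]_n,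
   (s \in Smax -> qcT (Fdual s) (PsigImg v s) g) /\ (s \notin Smax -> kS s = 1%N).
  move=> s; exact: (proj2_sig (constructive_indefinite_description _ (spec s))).
pose gS s := proj1_sig (constructive_indefinite_description _ (gS_ex s)).
have hgS : forall s, (s \in Smax -> qcT (Fdual s) (PsigImg v s) (gS s)) /\ (s \notin Smax -> kS s = 1%N).
  move=> s; exact: (proj2_sig (constructive_indefinite_description _ (gS_ex s))).
pose T := {dffun forall s : {set 'I_n}, 'I_(kS s)}.
pose G (X : T) : {ffun {set 'I_n} -> 'rV[int]_n} :=
  [ffun s => if s \in Smax then gS s (X s) else 0].
have qG : qcT (Hp Smax) (Qp v Smax) G.
  split.
  - move=> X s; rewrite ffunE; split => [hs|/negPf -> //]; rewrite hs.
    by case: ((hgS s).1 hs) => h1 _ _; exact: h1.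
  - move=> X X' hq; apply/ffunP => s; case: (boolP (s \in Smax)) => hs.
      case: ((hgS s).1 hs) => _ h2 _; apply: h2; have := hq s hs; by rewrite !ffunE hs.
    have k1 := (hgS s).2 hs; move: (X s) (X' s); rewrite k1 => a b.
    by rewrite (ord1 a) (ord1 b).
  - move=> Y hY.
    have ex : forall s, exists t : 'I_(kS s), s \in Smax -> PsigImg v s (Y s - gS s t).
      move=> s; case: (boolP (s \in Smax)) => hs.
        case: ((hgS s).1 hs) => _ _ h3; case: (h3 (Y s) ((hY s).1 hs)) => t ht.
        by exists t.
      have h0 : (0 < kS s)%N by rewrite ((hgS s).2 hs).
      by exists (Ordinal h0) => h; exfalso; move/negP: hs; apply.
    have [ch hch] : exists ch : (forall s, 'I_(kS s)), forall s, s \in Smax -> PsigImg v s (Y s - gS s (ch s)).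
      exists (fun s => proj1_sig (constructive_indefinite_description _ (ex s))) => s.
      exact: (proj2_sig (constructive_indefinite_description _ (ex s))).
    exists (finfun ch); move=> s hs; rewrite !ffunE hs; exact: hch.
have cardT : #|T| = (\prod_s kS s)%N.
  rewrite card_dep_ffun foldrE big_map big_enum /=; apply: eq_big => [s|s _]; [by [] | exact: card_ord].
have [khat hkhat] : exists khat, quot_card (Hp Smax) (Sp v Smax) khat.
  apply: (@coarsen _ _ _ _ G (subg_Sp v Smax)).
    by move=> t; case: qG.
  move=> a ha; case: qG => _ _ h3; case: (h3 a ha) => t ht; exists t; exact: QS.
case: (quot_qcT hkhat) => g1 hg1.
have hsub := sub_finite (A := Hp Smax) (subg_Sp v Smax) (subg_Qp v Smax) (@QS _ _ v Smax) qG.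
have htow := tower (subg_Hp Smax) (subg_Sp v Smax) (subg_Qp v Smax) (@QS _ _ v Smax) hg1 hsub.
have eqc := qc_uniq (subg_Qp v Smax) htow qG.
rewrite card_prod card_ord cardT in eqc.
have hsub' : qcT (fun x => Hp Smax x /\ exists w, Qp v Smax (x - fE Smax w)) (Qp v Smax)
    (fun t : {t : T | asb (Sp v Smax (G t))} => G (val t)).
  apply: qcT_extA hsub => x; split => -[h1 h2]; split => //; exact/Sp_fE.
case: (qc_iso (fEB Smax) (subg_Qp v Smax) (fE_Hp Smax) hsub') => h hh.
have idxc := qcT_card hh.
set idx := #|_| in idxc eqc.
have hidx : index_Cl_Pic v Smax idx.
  apply: quot_card_ext idxc => x; first by [].
  by split => /(Pic_fE hfan).
exists idx, khat, kS; split => //.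
  by move=> s hs; rewrite /card_Ksig -[kS s]card_ord; exact: qcT_card ((hgS s).1 hs).
have kpos : (0 < khat)%N.
  case: hg1 => _ _ h3; case: (h3 0 (subg_Hp Smax).1) => t _.
  by apply: leq_ltn_trans (ltn_ord t).
have -> : \prod_(s in Smax) ((kS s)%:R : rat) = (\prod_s kS s)%N%:R.
  rewrite natr_prod [LHS]big_mkcond /=; apply: eq_bigr => s _.
  by case: (boolP (s \in Smax)) => hs //; rewrite ((hgS s).2 hs).
rewrite -eqc natrM mulKf //.
by rewrite pnatr_eq0 -lt0n.
Qed.
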